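(* Let $k$ be a positive integer, $c\ge 2$ an integer, and $m=k(c^2-1)+1$. Then there exists a single-category instance $I$ with $m$ goods, cardinality constraint $k$, and some number $n$ of agents with $kn\ge m$, such that $$\frac{\text{OPT-USW}(I)}{\max_{\mathcal{A}\in \mathcal{C}_k(I)}\text{USW}(\mathcal{A})}\ge \frac{1}{2}\left(1+\sqrt{1+\frac{m-1}{k}}\right).$$
   Context: A single-category instance consists of $n$ agents and a set $M$ of $m$ indivisible goods; each agent $i$ has an additive utility function $u_i:2^M\to\mathbb{R}_{\ge 0}$ with $u_i(\emptyset)=0$ and $u_i(M)=1$. An allocation is a partition $(A_1,\dots,A_n)$ of $M$, agent $i$ receiving $A_i$. It is cardinal (for constraint $k$) if $|A_i|\le k$ for all $i$; $\mathcal{C}_k(I)$ is the set of cardinal allocations. $\text{USW}(\mathcal{A})=\sum_i u_i(A_i)$ and $\text{OPT-USW}(I)$ is its maximum over all allocations. *)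

(* Defs.v *)
From HB Require Import structures.
From mathcomp Require Import all_boot all_order all_algebra.
From mathcomp Require Import reals.
Set Implicit Arguments. Unset Strict Implicit. Unset Printing Implicit Defensive.
Import Order.TTheory GRing.Theory Num.Theory.
Local Open Scope ring_scope.

Section SingleCategory.
Variables (R : realType) (n m : nat).

(* Additive utilities are given by the values of single goods:
   u i g = u_i({g}); u_i(S) = \sum_(g in S) u i g. *)
Definition util_of (u : 'I_n -> 'I_m -> R) (i : 'I_n) (S : {set 'I_m}) : R :=
  \sum_(g in S) u i g.

Definition is_instance (u : 'I_n -> 'I_m -> R) : Prop :=
  (forall i g, 0 <= u i g) /\ (forall i, util_of u i [set: 'I_m] = 1).

(* An allocation (a partition of M into n bundles) is encoded by the map
   sending each good to the agent that receives it. *)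
Definition allocation := {ffun 'I_m -> 'I_n}.

Definition bundle (a : allocation) (i : 'I_n) : {set 'I_m} := [set g | a g == i].

Definition cardinal (k : nat) (a : allocation) : bool :=
  [forall i, #|bundle a i| <= k]%N.

Definition USW (u : 'I_n -> 'I_m -> R) (a : allocation) : R :=
  \sum_i util_of u i (bundle a i).

(* Maximum over all allocations (utilities are nonnegative, so 0 is a
   neutral starting value). *)
Definition OPT_USW (u : 'I_n -> 'I_m -> R) : R :=
  \big[Num.max/0]_(a : allocation) USW u a.

Definition OPT_USW_card (k : nat) (u : 'I_n -> 'I_m -> R) : R :=
  \big[Num.max/0]_(a : allocation | cardinal k a) USW u a.

End SingleCategory.

(* Main.v *)
Require Import Defs.
From HB Require Import structures.
From mathcomp Require Import all_boot all_order all_algebra.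
From mathcomp Require Import reals perm zify ring lra.
Import Order.TTheory GRing.Theory Num.Theory.
Local Open Scope ring_scope.

Lemma isum (R : realType) (m lo len : nat) (a : R) : (lo + len <= m)%N ->
  \sum_(g < m) (if (lo <= g < lo + len)%N then a else 0) = a *+ len.
Proof.
move=> H.
rewrite -(big_mkord xpredT (fun g => if (lo <= g < lo + len)%N then a else 0)).
rewrite (@big_cat_nat _ _ _ lo) //=; last by lia.
rewrite (@big_cat_nat _ _ _ (lo + len) lo) //=; last by lia.
rewrite (@eq_big_nat _ _ _ 0 lo _ (fun _ => 0)); last by move=> i Hi; case: ifP => //; lia.
rewrite (@eq_big_nat _ _ _ lo (lo+len) _ (fun _ => a)); last by move=> i Hi; case: ifP => //; lia.
rewrite (@eq_big_nat _ _ _ (lo+len) m _ (fun _ => 0)); last by move=> i Hi; case: ifP => //; lia.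
rewrite !big1_eq sumr_const_nat add0r addr0; congr (_ *+ _); lia.
Qed.

Lemma USW_sum (R : realType) n m (u : 'I_n -> 'I_m -> R) (a : allocation n m) :
  USW u a = \sum_g u (a g) g.
Proof.
rewrite /USW /util_of /bundle.
rewrite (eq_bigr (fun i => \sum_(g | a g == i) u i g)); last first.
  by move=> i _; apply: eq_bigl => g; rewrite inE.
rewrite (exchange_big_dep xpredT) //=.
apply: eq_bigr => g _.
by rewrite (eq_bigl (fun i => i == a g)) ?big_pred1_eq // => i; rewrite eq_sym.
Qed.
Theorem lemma1 (R : realType) (k c m : nat) :
  (0 < k)%N -> (2 <= c)%N -> m = (k * (c ^ 2 - 1) + 1)%N ->
  exists (n : nat) (u : 'I_n -> 'I_m -> R),
    is_instance u /\ (m <= k * n)%N /\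
    (1 + Num.sqrt (1 + (m - 1)%:R / k%:R)) / 2
      <= OPT_USW u / OPT_USW_card k u.
Proof.
move=> k0 c2 hm.
have csq : (c ^ 2 - 1 = c.-1 * c.+1)%N.
  by case: c c2 {hm} => // c' _; rewrite expnS expn1 /=; nia.
pose s := (k * c.+1)%N. pose t := c.-1.
have s0 : (0 < s)%N by rewrite /s; lia.
have hm' : m = (1 + t * s)%N.
  by rewrite hm csq /s /t mulnCA addnC.
have m0 : (0 < m)%N by lia.
have tm : (t < m)%N by rewrite hm'; have := leq_pmulr t s0; lia.
pose o0 := Ordinal m0. pose ot := Ordinal tm.
pose v1 := fun (i : 'I_m) => if (0 <= i < 0 + t)%N then (s%:R^-1 : R) else 0.
pose v2 := fun (g : 'I_m) => if (0 <= g < 0 + 1)%N then (1 : R) else 0.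
pose u := fun (i g : 'I_m) =>
  if (i < t)%N then (if (1 + i * s <= g < 1 + i * s + s)%N then (s%:R^-1 : R) else 0)
  else v2 g.
have sR : (s%:R : R) != 0 by rewrite pnatr_eq0 -lt0n.
have ubound : forall i g, u i g <= v1 i + v2 g.
  move=> i g; rewrite /u /v1 /v2 leq0n add0n /=.
  have h1 : (0 : R) <= s%:R^-1 by rewrite invr_ge0 ler0n.
  set x := (if (0 <= g < 0 + 1)%N then 1 else 0 : R).
  have h2 : 0 <= x by rewrite /x; case: ifP; rewrite ?ler01 ?lexx.
  case: ifP => it; last by rewrite add0r lexx.
  case: ifP => _; lra.
have u0 : forall i g, 0 <= u i g.
  move=> i g; rewrite /u /v2 /=.
  by case: ifP => _; [case: ifP => _|case: ifP => _]; rewrite ?invr_ge0 ?ler0n ?ler01 ?lexx.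
exists m, u; split; [split|split].
- exact: u0.
- move=> i; rewrite /util_of (eq_bigl xpredT); last by move=> g; rewrite inE.
  case: (boolP (i < t)%N) => it.
    rewrite (eq_bigr (fun g : 'I_m => if (1 + i*s <= g < 1+i*s+s)%N then s%:R^-1 else 0)); last by move=> g _; rewrite /u it.
    rewrite isum; last first.
      have := leq_mul it (leqnn s); rewrite mulSn; lia.
    have -> : s%:R^-1 *+ s = s%:R^-1 * s%:R :> R by rewrite mulr_natr.
    by rewrite mulVf.
  rewrite (eq_bigr v2); last by move=> g _; rewrite /u (negbTE it).
  by rewrite isum //; lia.
- by rewrite leq_pmull.
pose astar : allocation m m := [ffun g : 'I_m => if (0 < g)%N then insubd o0 ((g - 1) %/ s)%N else ot].
have Hopt : c%:R <= OPT_USW u.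
  apply: le_trans (le_bigmax _ _ astar).
  rewrite USW_sum.
  rewrite (eq_bigr (fun g : 'I_m => v2 g + (if (1 <= g < 1 + t * s)%N then s%:R^-1 else 0))); last first.
    move=> g _; rewrite ffunE /u /v2.
    case: (posnP g) => [g0|gp].
      rewrite g0 /= ltnn /= addr0 //.
    have hq : ((g - 1) %/ s < t)%N.
      rewrite ltn_divLR //. have := ltn_ord g; lia.
    rewrite val_insubd (ltn_trans hq tm) hq /=.
    have -> : (1 + (g - 1) %/ s * s <= g < 1 + (g - 1) %/ s * s + s)%N.
      have := divn_eq (g - 1) s; have := ltn_pmod (g - 1) s0.
      move: ((g - 1) %/ s)%N ((g - 1) %% s)%N => q r; lia.
    have -> : (g < 1)%N = false by lia.
    have -> : (g < 1 + t * s)%N by have := ltn_ord g; lia.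
    by rewrite add0r.
  rewrite big_split /= /v2 isum // isum; last by lia.
  have sK : s%:R^-1 *+ s = 1 :> R by rewrite -(mulr_natr (s%:R^-1 : R) s) mulVf.
  rewrite mulnC mulrnA sK addrC natr1 ler_nat /t; lia.
pose B : R := 1 + (k%:R * (s%:R^-1 *+ t)).
have Hcard : OPT_USW_card k u <= B.
  apply: bigmax_le; first by rewrite /B addr_ge0 ?ler01 // mulr_ge0 ?ler0n // mulrn_wge0 // invr_ge0 ler0n.
  move=> a /forallP ca.
  apply: (@le_trans _ _ (USW (fun i g => v1 i + v2 g) a)).
    by apply: ler_sum => i _; apply: ler_sum => g _; apply: ubound.
  rewrite /USW /util_of.
  under eq_bigr => i _ do rewrite big_split /=.
  rewrite big_split /= addrC /B; apply: lerD.
    have := @USW_sum R m m (fun (i g : 'I_m) => v2 g) a; rewrite /USW /util_of => ->.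
    by rewrite /v2 isum.
  apply: (@le_trans _ _ (\sum_i k%:R * v1 i)).
    apply: ler_sum => i _; rewrite sumr_const -(mulr_natl (v1 i)) ler_wpM2r //.
      by rewrite /v1; case: ifP; rewrite ?invr_ge0 ?ler0n ?lexx.
    by rewrite ler_nat; apply: ca.
  by rewrite -mulr_sumr /v1 isum //; lia.
have Hpos : 0 < OPT_USW_card k u.
  pose a1 : allocation m m := [ffun g => tperm o0 ot g].
  have ca1 : cardinal k a1.
    apply/forallP => i.
    have -> : bundle a1 i = [set tperm o0 ot i].
      by apply/setP => g; rewrite !inE ffunE (canF_eq (tpermK o0 ot)).
    by rewrite cards1.
  apply: lt_le_trans (le_bigmax_cond _ _ ca1).
  rewrite USW_sum (bigD1 o0) //= ffunE tpermL.
  apply: (@lt_le_trans _ _ 1); first exact: ltr01.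
  have -> : u ot o0 = 1 by rewrite /u /v2 /= ltnn.
  rewrite lerDl sumr_ge0 // => g _; exact: u0.
have ct : (c%:R : R) = t%:R + 1 by rewrite natr1 /t prednK // (leq_trans _ c2).
have sE : (s%:R : R) = k%:R * (c%:R + 1) by rewrite /s natrM natr1.
have k0R : (k%:R : R) != 0 by rewrite pnatr_eq0 -lt0n.
have c1 : (c%:R + 1 : R) != 0 by rewrite natr1 pnatr_eq0.
have e1 : (1 + (m - 1)%:R / k%:R : R) = c%:R ^+ 2.
  have -> : (m - 1 = t * s)%N by lia.
  rewrite natrM sE ct; field.
  by [].
have BE : B = 2 * c%:R / (c%:R + 1).
  have c1' : (t%:R + 1 + 1 : R) != 0 by rewrite -ct.
  rewrite /B -(mulr_natr (s%:R^-1 : R) t) sE ct; field.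
  by rewrite c1' k0R.
rewrite e1 sqrtr_sqr ger0_norm ?ler0n // ler_pdivlMr //.
apply: le_trans (Hopt).
apply: (@le_trans _ _ ((1 + c%:R) / 2 * B)).
  apply: ler_wpM2l => //; rewrite divr_ge0 // addr_ge0 ?ler01 ?ler0n //.
rewrite BE le_eqVlt; apply/orP; left; apply/eqP; field.
exact: c1.
Qed.
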